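(* Consider the DRV process with choice function $k(n)$ satisfying $k(n)\to\infty$ and $k(n)\ge\log_2 n$. Then there is a constant $C$ such that for all $n$ and every time $t\le n$, the expected number of red edges plus the expected number of green edges among the first $t$ edges added is at most $C\,\frac{n}{k(n)}$.
   Context: The DRV process (Degree Rule with Varying Choice): fix a function $k=k(n)$ with $2\le k(n)\le n$. Start at time $t=0$ with $n$ isolated vertices and no edges. At each time step $t=0,1,2,\dots$ (one edge is added per step, so after $t$ steps the graph has $t$ edges; multiple edges are allowed), independently of the past choose a set $V_t$ of $k(n)$ distinct vertices uniformly at random, and let $V_{t,d}$ be the set of vertices in $V_t$ whose current degree is $d$. If $|V_{t,0}|\ge 2$, add an edge between two vertices of $V_{t,0}$ sampled uniformly at random without replacement; otherwise, if $|V_{t,1}|\ge 2$, add an edge between two vertices of $V_{t,1}$ sampled uniformly at random without replacement; otherwise add an edge between two vertices of $V_t$ sampled uniformly at random without replacement. Edge types and colors: an edge is an $(i,j)$ edge if, at the moment it was added, its two endpoints had degrees $i$ and $j$. Each added edge is colored as follows: a $(0,0)$ edge added at a time $t\le n/2$ is blue; a $(1,1)$ edge added at a time $t\ge n/2$ is blue; a $(0,1)$ or $(1,1)$ edge added at a time $t< n/2$ is green; every other edge (i.e. $(0,0)$ or $(0,1)$ edges added after time $n/2$, and any $(i,j)$ edge with $i\ge2$ or $j\ge 2$ at any time) is red. *)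

(* Defs.v *)
From HB Require Import structures.
From mathcomp Require Import all_boot all_order all_algebra.
Set Implicit Arguments. Unset Strict Implicit. Unset Printing Implicit Defensive.
Import Order.TTheory GRing.Theory Num.Theory.

(* Uniform average of f over a finite set A (A nonempty in all uses). *)
Definition avg (T : finType) (A : {set T}) (f : T -> rat) : rat :=
  ((\sum_(x in A) f x) / (#|A|%:R))%R.

(* Vertices are 'I_n; a graph state is recorded by its degree function. *)
Definition degs (n : nat) := {ffun 'I_n -> nat}.

Definition ksets (n k : nat) : {set {set 'I_n}} := [set V : {set 'I_n} | #|V| == k].

Definition Vd (n : nat) (d : degs n) (V : {set 'I_n}) (j : nat) : {set 'I_n} :=
  [set v in V | d v == j].

(* The set from which the two endpoints are sampled. *)
Definition cand (n : nat) (d : degs n) (V : {set 'I_n}) : {set 'I_n} :=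
  if 2 <= #|Vd d V 0| then Vd d V 0
  else if 2 <= #|Vd d V 1| then Vd d V 1
  else V.

(* Ordered pairs of distinct vertices of W: sampling two vertices uniformly
   without replacement. *)
Definition dpairs (n : nat) (W : {set 'I_n}) : {set 'I_n * 'I_n} :=
  [set p : 'I_n * 'I_n | [&& p.1 \in W, p.2 \in W & p.1 != p.2]].

Definition add_edge (n : nat) (d : degs n) (p : 'I_n * 'I_n) : degs n :=
  [ffun v => d v + (v == p.1) + (v == p.2)].

(* Colours of an (i,j) edge added at time t (with n vertices). "t <= n/2" is
   written 2t <= n, etc. *)
Definition is_blue (n t i j : nat) : bool :=
  [&& i == 0, j == 0 & 2 * t <= n] || [&& i == 1, j == 1 & n <= 2 * t].
Definition is_green (n t i j : nat) : bool :=
  (2 * t < n) && (((i == 0) && (j == 1)) || ((i == 1) && (j == 0))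
                  || ((i == 1) && (j == 1))).
Definition is_red (n t i j : nat) : bool := ~~ is_blue n t i j && ~~ is_green n t i j.

Definition rg_cost (n t i j : nat) : rat :=
  ((is_red n t i j)%:R + (is_green n t i j)%:R)%R.

Fixpoint expRG (n k r s : nat) (d : degs n) : rat :=
  match r with
  | 0 => 0%R
  | r'.+1 =>
      avg (ksets n k) (fun V =>
        avg (dpairs (cand d V)) (fun p =>
          (rg_cost n s (d p.1) (d p.2) + expRG k r' s.+1 (add_edge d p))%R))
  end.

Definition DRV_expected_red_green (n k t : nat) : rat :=
  @expRG n k t 0 [ffun => 0].

(* Main.v *)
Require Import Defs.
From HB Require Import structures.
From mathcomp Require Import all_boot all_order all_algebra.
From mathcomp Require Import zify ring lra.
Import Order.TTheory GRing.Theory Num.Theory.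
Set Implicit Arguments. Unset Strict Implicit. Unset Printing Implicit Defensive.

Lemma sum_ind (T : finType) (A : pred T) (b : pred T) :
  \sum_(x in A) (b x : nat) = #|[pred x | (x \in A) && b x]|.
Proof.
rewrite -sum1_card [RHS]big_mkcond [LHS]big_mkcond /=.
apply: eq_bigr => x _; rewrite inE.
by case: (x \in A).
Qed.

Lemma count0 (n k : nat) (A : {set 'I_n}) :
  #|[set V : {set 'I_n} | (#|V| == k) && (V :&: A == set0)]| = 'C(n - #|A|, k).
Proof.
have -> : n - #|A| = #|~: A| by rewrite [#|~: A|]cardsCs setCK card_ord.
rewrite -cards_draws.
apply: eq_card => V; rewrite !inE andbC; congr (_ && _).
by rewrite setI_eq0 disjoints_subset.
Qed.

Lemma count1 (n k : nat) (A : {set 'I_n}) :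
  #|[set V : {set 'I_n} | (#|V| == k.+1) && (#|V :&: A| == 1)]| = #|A| * 'C(n - #|A|, k).
Proof.
have -> : n - #|A| = #|~: A| by rewrite [#|~: A|]cardsCs setCK card_ord.
have E1 : forall V : {set 'I_n}, ((#|V| == k.+1) && (#|V :&: A| == 1) : nat)
   = \sum_(x in A) ((#|V| == k.+1) && (V :&: A == [set x]) : nat).
  move=> V; rewrite sum_ind.
  case: (#|V| == k.+1) => /=; last first.
    by apply/esym/eq_card0 => x; rewrite !inE /= andbF.
  case: (boolP (#|V :&: A| == 1)) => [/cards1P [x0 Hx0] | H].
    have x0A : x0 \in A.
      have : x0 \in V :&: A by rewrite Hx0 set11.
      by rewrite inE => /andP[].
    apply/esym/(@eq_card1 _ x0) => x; rewrite !inE /=.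
    rewrite Hx0; apply/andP/eqP => [[_ /eqP E] | ->]; last by rewrite x0A.
    by apply/set1_inj.
  apply/esym/eq_card0 => x; rewrite !inE /=.
  apply/negP => /andP[_ /eqP E]; by rewrite E cards1 in H.
rewrite -sum1_card.
transitivity (\sum_(V : {set 'I_n}) ((#|V| == k.+1) && (#|V :&: A| == 1) : nat)).
  rewrite [LHS]big_mkcond /=; apply: eq_bigr => V _; rewrite inE.
  by case: (_ && _).
under eq_bigr => V _ do rewrite E1.
rewrite exchange_big /=.
rewrite -[X in X * _]sum1_card big_distrl /=.
apply: eq_bigr => x xA; rewrite mul1n.
rewrite sum_ind -cards_draws.
set D := [set U : {set 'I_n} | U \subset ~: A & #|U| == k].
have xnU : forall U, U \in D -> x \notin U.
  move=> U; rewrite inE => /andP[/subsetP sU _]; apply/negP => /sU.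
  by rewrite inE xA.
rewrite -(@card_in_imset _ _ (fun U => x |: U) D); last first.
  move=> U1 U2 H1 H2 /= E; by rewrite -(setU1K (xnU _ H1)) E setU1K // xnU.
apply: eq_card => V; rewrite inE /=.
apply/andP/imsetP => [[/eqP cV /eqP VA] | [U UD ->]].
  have xV : x \in V.
    have : x \in V :&: A by rewrite VA set11.
    by rewrite inE => /andP[].
  exists (V :\ x); last by rewrite setD1K.
  rewrite inE; apply/andP; split.
    apply/subsetP => y; rewrite !inE => /andP[yx yV]; apply/negP => yA.
    have : y \in V :&: A by rewrite inE yV yA.
    by rewrite VA inE (negbTE yx).
  by move: cV; rewrite (cardsD1 x) xV add1n => -[->].
move: (UD); rewrite inE => /andP[sU /eqP cU].
split; first by rewrite cardsU1 xnU // cU.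
apply/eqP/setP => y; rewrite !inE; apply/andP/eqP => [[/orP[/eqP //| yU] yA]| ->].
  by move/subsetP: sU => /(_ y yU); rewrite inE yA.
by rewrite eqxx xA.
Qed.

Lemma hockey1 (j m : nat) : \sum_(0 <= a < m.+1) 'C(m - a, j) = 'C(m.+1, j.+1).
Proof.
elim: m => [|m IH]; first by rewrite big_nat1 subn0 !bin0n; case: j.
rewrite big_nat_recl // subn0.
under eq_bigr => a _ do rewrite subSS.
by rewrite IH [in RHS]binS addnC.
Qed.

Lemma hockey2 (j m : nat) : \sum_(0 <= a < m.+1) a * 'C(m - a, j) = 'C(m.+1, j.+2).
Proof.
elim: m => [|m IH]; first by rewrite big_nat1 mul0n bin_small.
rewrite big_nat_recl // mul0n add0n.
under eq_bigr => a _ do rewrite subSS mulSn.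
by rewrite big_split /= IH hockey1 [in RHS]binS addnC.
Qed.

Local Open Scope ring_scope.

Section Proof.
Variables (n k : nat).
Hypothesis (k2 : (2 <= k)%N) (kn : (k <= n)%N).

Definition g (a : nat) : nat := 'C(n - a, k) + a * 'C(n - a, k.-1).
Definition beta (a : nat) : rat := (g a)%:R / ('C(n, k))%:R.
Definition K := ksets n k.

Lemma Npos : (0 < 'C(n, k))%N.
Proof. by rewrite bin_gt0. Qed.

Lemma cardK : #|K| = 'C(n, k).
Proof. by rewrite /K /ksets card_draws card_ord. Qed.

Lemma g_step a : (g a.+1 <= g a)%N.
Proof.
rewrite /g; case: (ltnP a n) => an.
  have -> : (n - a = (n - a.+1).+1)%N by lia.
  set m := (n - a.+1)%N.
  case: k k2 => [|[|k']] // _.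
  rewrite !binS /=; nia.
have -> : (n - a.+1 = 0)%N by lia.
rewrite !bin0n; case: k k2 => [|[|k']] // _; by rewrite /= muln0.
Qed.

Lemma g_anti a b : (a <= b)%N -> (g b <= g a)%N.
Proof.
move=> /subnK <-; elim: (b - a)%N => [|c IH] //=.
by rewrite addSn; apply: leq_trans (g_step _) IH.
Qed.

Lemma beta_anti a b : (a <= b)%N -> beta b <= beta a.
Proof.
move=> ab; rewrite /beta ler_pM2r ?invr_gt0 ?ltr0n ?Npos // ler_nat.
exact: g_anti.
Qed.

Lemma g0 : g 0 = 'C(n, k).
Proof. by rewrite /g subn0 mul0n addn0. Qed.

Lemma beta_ge0 a : 0 <= beta a.
Proof. by rewrite /beta divr_ge0. Qed.

Lemma beta_le1 a : beta a <= 1.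
Proof.
have := beta_anti (leq0n a); rewrite /beta g0 divff //.
by rewrite pnatr_eq0 -lt0n Npos.
Qed.

Definition B : rat := \sum_(0 <= a < n.+1) beta a.

Lemma B_eq : B = 2 * (n.+1)%:R / (k.+1)%:R.
Proof.
rewrite /B /beta -big_distrl /= -natr_sum.
have -> : (\sum_(0 <= a < n.+1) g a = 2 * 'C(n.+1, k.+1))%N.
  rewrite /g big_split /= hockey1.
  case: k k2 => [|[|k']] // _ /=; by rewrite hockey2 addnn -mul2n.
have H := mul_bin_diag n.+1 k; rewrite /= in H.
apply/eqP; rewrite eqr_div ?pnatr_eq0 -?lt0n ?Npos //.
rewrite -!natrM; apply/eqP; congr (_%:R). by rewrite -[RHS]mulnA H; ring.
Qed.

Lemma B_ge0 : 0 <= B.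
Proof. by rewrite /B sumr_ge0 // => a _; apply: beta_ge0. Qed.

Lemma B_le : B <= 4 * n%:R / k%:R.
Proof.
rewrite B_eq.
have k0 : 0 < k%:R :> rat by rewrite ltr0n; lia.
have k1 : 0 < (k.+1)%:R :> rat by rewrite ltr0n.
rewrite ler_pdivrMr // mulrAC ler_pdivlMr //.
rewrite -!natrM ler_nat; nia.
Qed.


Lemma avg_le (T : finType) (A : {set T}) (f h : T -> rat) :
  (forall x, x \in A -> f x <= h x) -> avg A f <= avg A h.
Proof.
move=> H; rewrite /avg ler_wpM2r ?invr_ge0 ?ler0n //.
by apply: ler_sum.
Qed.

Lemma avg_affine (T : finType) (A : {set T}) (c a : rat) (f : T -> rat) :
  A != set0 -> avg A (fun x => c + a * f x) = c + a * avg A f.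
Proof.
move=> A0; have cA : (#|A|%:R : rat) != 0 by rewrite pnatr_eq0 cards_eq0.
rewrite /avg big_split /= sumr_const -big_distrr /= mulrDl. rewrite -mulr_natr. by field.
Qed.

Lemma avg_const (T : finType) (A : {set T}) (c : rat) :
  A != set0 -> avg A (fun _ => c) = c.
Proof.
move=> A0; have cA : (#|A|%:R : rat) != 0 by rewrite pnatr_eq0 cards_eq0.
rewrite /avg sumr_const -mulr_natr; by field.
Qed.

Lemma K0 : K != set0.
Proof. by rewrite -card_gt0 cardK Npos. Qed.

Lemma avg_beta (A : {set 'I_n}) :
  avg K (fun V => (#|V :&: A| <= 1)%N%:R) = beta #|A|.
Proof.
rewrite /avg cardK /beta; congr (_ / _).
rewrite -natr_sum; congr (_%:R).
rewrite sum_ind /g.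
rewrite -count0 -count1 prednK; last lia.
set S0 := [set V : {set 'I_n} | _ & _]; set S1 := [set V : {set 'I_n} | _ & _].
have H0 : S0 :&: S1 = set0.
  apply/setP => V; rewrite !inE.
  by case: (V :&: A =P set0) => [->|]; rewrite ?cards0 ?andbF.
have := cardsU S0 S1; rewrite H0 cards0 subn0 => <-.
apply: eq_card => V; rewrite inE /S0 /S1 /K /ksets !inE -andb_orr.
congr (_ && _); rewrite -cards_eq0.
by case: #|V :&: A| => [|[|m]].
Qed.

Lemma sumG (f : nat -> rat) (f0 : forall m, 0 <= f m) (f1 : forall m, f m <= 1) a w :
  \sum_(0 <= u < w) f (a - u)%N <= (w - a)%N%:R + \sum_(0 <= m < a.+1) f m.
Proof.
elim: a w => [|a IH] w.
  rewrite big_nat1 subn0.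
  under eq_bigr => u _ do rewrite sub0n.
  rewrite sumr_const_nat subn0 -[X in X <= _]addr0 lerD //.
  by rewrite -[X in _ <= X]/(1 *+ w) lerMn2r f1 orbT.
case: w => [|w].
  by rewrite big_mkord big_ord0 sub0n add0r sumr_ge0.
rewrite big_nat_recl // subn0 subSS.
under eq_bigr => u _ do rewrite subSS.
rewrite big_nat_recr //= addrA addrC lerD //.
Qed.

Lemma sumF (f : nat -> rat) (f0 : forall m, 0 <= f m) a b c :
  (a <= b)%N -> (b <= c)%N -> \sum_(a <= u < b) f u <= \sum_(0 <= u < c) f u.
Proof.
move=> ab bc.
rewrite (@big_cat_nat _ _ _ a 0 c) //=; last lia.
rewrite (@big_cat_nat _ _ _ b a c) //=.
rewrite -[X in X <= _]add0r -[X in X <= _]addr0 addrA.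
by rewrite !lerD // sumr_ge0.
Qed.

Lemma sum_indT (T : finType) (b : pred T) : \sum_x (b x : nat) = #|[pred x | b x]|.
Proof.
rewrite -sum1_card [RHS]big_mkcond /=; apply: eq_bigr => x _.
by rewrite inE; case: (b x).
Qed.

Definition zset (d : degs n) := [set v | d v == 0%N].
Definition oset (d : degs n) := [set v | d v == 1%N].
Definition zs d := #|zset d|.
Definition inv (s : nat) (d : degs n) := (\sum_v d v == 2 * s)%N.

Lemma zs_sum d : zs d = (\sum_v (d v == 0%N : nat))%N.
Proof. by rewrite sum_indT /zs; apply: eq_card => v; rewrite !inE. Qed.
Lemma os_sum d : #|oset d| = (\sum_v (d v == 1%N : nat))%N.
Proof. by rewrite sum_indT; apply: eq_card => v; rewrite !inE. Qed.
Lemma n_sum : n = (\sum_(v : 'I_n) 1)%N.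
Proof. by rewrite sum1_card card_ord. Qed.

Lemma inv_z s d : inv s d -> (n <= zs d + 2 * s)%N.
Proof.
move=> /eqP H; rewrite -H zs_sum -big_split /= {1}n_sum; apply: leq_sum => v _.
by case: (d v).
Qed.

Lemma inv_o s d : inv s d -> (2 * (n - zs d) <= 2 * s + #|oset d|)%N.
Proof.
move=> /eqP H.
have : (2 * n <= 2 * zs d + #|oset d| + \sum_v d v)%N.
  rewrite {1}n_sum zs_sum os_sum !big_distrr /= -!big_split /=.
  apply: leq_sum => v _; by case: (d v) => [|[|m]].
rewrite H; lia.
Qed.

Lemma sum_eq1 (a : 'I_n) : (\sum_(v : 'I_n) (v == a : nat))%N = 1%N.
Proof. by rewrite sum_indT; apply: eq_card1 => v; rewrite !inE. Qed.

Lemma inv_add s (d : degs n) p : inv s d -> inv s.+1 (add_edge d p).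
Proof.
move=> /eqP H; rewrite /inv.
under eq_bigr => v _ do rewrite ffunE.
by rewrite !big_split /= H !sum_eq1; apply/eqP; lia.
Qed.

Lemma zset_add (d : degs n) p : zset (add_edge d p) = zset d :\ p.1 :\ p.2.
Proof.
apply/setP => v; rewrite !inE ffunE !addn_eq0 !eqb0.
by rewrite andbC [X in _ && X]andbC andbA.
Qed.

Lemma zs_add (d : degs n) p : (zs (add_edge d p) <= zs d)%N.
Proof.
rewrite /zs zset_add; apply: subset_leq_card.
by apply: subset_trans (subsetDl _ _) (subsetDl _ _).
Qed.

Lemma zs_add00 (d : degs n) p : p.1 != p.2 -> d p.1 = 0%N -> d p.2 = 0%N ->
  (zs (add_edge d p)).+2 = zs d.
Proof.
move=> ne h1 h2; rewrite /zs zset_add.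
rewrite [in RHS](cardsD1 p.1) [in RHS](cardsD1 p.2 (zset d :\ p.1)).
by rewrite !inE h1 h2 eq_sym ne.
Qed.

Lemma cost_le1 s i j : rg_cost n s i j <= 1.
Proof.
rewrite /rg_cost /is_red; case: (is_green n s i j); rewrite ?andbF ?addr0 ?add0r //.
by case: (_ && _).
Qed.

Lemma cost_ge0 s i j : 0 <= rg_cost n s i j.
Proof. by rewrite /rg_cost addr_ge0. Qed.

Lemma cost00 s : (2 * s < n)%N -> rg_cost n s 0 0 = 0.
Proof.
move=> h; rewrite /rg_cost /is_red /is_blue /is_green /= (ltnW h) /=.
by rewrite andbF /= addr0.
Qed.

Lemma cost11 s : (n <= 2 * s)%N -> rg_cost n s 1 1 = 0.
Proof.
move=> h; rewrite /rg_cost /is_red /is_blue /is_green /= h /=.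
by rewrite ltnNge h.
Qed.

Lemma Vd0 (d : degs n) V : Vd d V 0 = V :&: zset d.
Proof. by apply/setP => v; rewrite !inE. Qed.
Lemma Vd1 (d : degs n) V : Vd d V 1 = V :&: oset d.
Proof. by apply/setP => v; rewrite !inE. Qed.

Lemma pair_in (W : {set 'I_n}) p : p \in dpairs W -> [/\ p.1 \in W, p.2 \in W & p.1 != p.2].
Proof. by rewrite inE => /and3P. Qed.

Lemma dpairs0 (W : {set 'I_n}) : (2 <= #|W|)%N -> dpairs W != set0.
Proof.
move=> hW; have : (0 < #|W|)%N by lia.
rewrite card_gt0 => /set0Pn [x xW].
have : (0 < #|W :\ x|)%N by move: hW; rewrite (cardsD1 x) xW; lia.
rewrite card_gt0 => /set0Pn [y]; rewrite !inE => /andP[yx yW].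
by apply/set0Pn; exists (x, y); rewrite inE /= xW yW eq_sym yx.
Qed.

Lemma cand_big (d : degs n) V : V \in K -> (2 <= #|cand d V|)%N.
Proof.
rewrite /K /ksets inE => /eqP cV; rewrite /cand.
by case: ifP => // _; case: ifP => // _; rewrite cV.
Qed.

Definition hh := (n - n./2)%N.

Lemma hh_iff s : (s < hh)%N = (2 * s < n)%N.
Proof.
have H := odd_double_half n; rewrite -muln2 in H.
rewrite /hh; case: (odd n) H => /= H; apply/idP/idP; lia.
Qed.

Definition Psi (s z : nat) : rat := \sum_(s <= u < n) beta (2 * (n - z) - 2 * u)%N.
Definition P1 (s : nat) (d : degs n) : rat :=
  3 / 2 * ((zs d)%:R + (2 * s)%N%:R - n%:R) + 4 * \sum_(s <= u < hh) beta (n - 2 * u)%N + B.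
Definition P2 (s : nat) (d : degs n) : rat := (zs d)%:R / 2 + Psi s (zs d).
Definition Phi (s : nat) (d : degs n) : rat := if (s < hh)%N then P1 s d else P2 s d.

Lemma zs_le (d : degs n) : (zs d <= n)%N.
Proof. by rewrite /zs -[X in (_ <= X)%N]card_ord max_card. Qed.

Lemma Psi_ge0 s z : 0 <= Psi s z.
Proof. by apply: sumr_ge0 => u _; apply: beta_ge0. Qed.

Lemma Psi_bound s z : (z <= n)%N -> Psi s z <= z%:R + B.
Proof.
move=> zn.
have s1 : Psi s z <= \sum_(0 <= u < n) beta (2 * (n - z) - 2 * u)%N.
  case: (leqP s n) => sn.
    by rewrite /Psi; apply: (@sumF (fun u => beta (2 * (n - z) - 2 * u)%N) (fun _ => beta_ge0 _)).
  by rewrite /Psi big_geq ?(ltnW sn) // sumr_ge0 // => u _; apply: beta_ge0.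
apply: (le_trans s1).
apply: (@le_trans _ _ (\sum_(0 <= u < n) beta (n - z - u)%N)).
  by apply: ler_sum => u _; apply: beta_anti; lia.
apply: (le_trans (sumG beta_ge0 beta_le1 _ _)).
have -> : (n - (n - z) = z)%N by lia.
rewrite lerD //; apply: (sumF beta_ge0) => //; lia.
Qed.

Lemma P1sum_bound : \sum_(0 <= u < hh) beta (n - 2 * u)%N <= 1 + B.
Proof.
apply: (@le_trans _ _ (\sum_(0 <= u < hh) beta (n./2 - u)%N)).
  apply: ler_sum => u _; apply: beta_anti.
  have H := odd_double_half n; rewrite -muln2 in H; lia.
apply: (le_trans (sumG beta_ge0 beta_le1 _ _)).
rewrite lerD //.
  rewrite -[1]/(1%:R) ler_nat /hh; have H := odd_double_half n; rewrite -muln2 in H; lia.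
apply: (sumF beta_ge0) => //.
have := half_leq (leqnSn n); rewrite -ltnS; lia.
Qed.

Lemma Psi_step s z : (s < n)%N -> Psi s z = beta (2 * (n - z) - 2 * s)%N + Psi s.+1 z.
Proof. by move=> sn; rewrite /Psi big_ltn. Qed.

Lemma Psi_mono s z z' : (z' <= z)%N -> Psi s z' <= Psi s z.
Proof. by move=> zz; apply: ler_sum => u _; apply: beta_anti; lia. Qed.

Lemma P2_le_P1 s d : (n <= 2 * s)%N -> P2 s d <= P1 s d.
Proof.
move=> ns; rewrite /P2 /P1.
have hP := Psi_bound s (zs_le d).
have h2 : (n%:R : rat) <= (2 * s)%N%:R by rewrite ler_nat.
have hS : 0 <= \sum_(s <= u < hh) beta (n - 2 * u)%N.
  by apply: sumr_ge0 => u _; apply: beta_ge0.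
have z0 : 0 <= (zs d)%:R :> rat by apply: ler0n.
lra.
Qed.

Lemma Phi_ge0 s d : inv s d -> 0 <= Phi s d.
Proof.
move=> /inv_z hz; rewrite /Phi; case: ifP => _.
  rewrite /P1.
  have h2 : (n%:R : rat) <= (zs d)%:R + (2 * s)%N%:R by rewrite -natrD ler_nat.
  have hS : 0 <= \sum_(s <= u < hh) beta (n - 2 * u)%N.
    by apply: sumr_ge0 => u _; apply: beta_ge0.
  have := B_ge0; lra.
by rewrite /P2 addr_ge0 ?Psi_ge0 // divr_ge0.
Qed.

Lemma mem_zo (d : degs n) V x j : x \in V :&: [set v | d v == j] -> d x = j.
Proof. by rewrite !inE => /andP[_ /eqP]. Qed.

Lemma pw2 s (d : degs n) V p : (n <= 2 * s)%N -> p \in dpairs (cand d V) ->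
  rg_cost n s (d p.1) (d p.2) + (zs (add_edge d p))%:R / 2
    <= (zs d)%:R / 2 + (#|V :&: oset d| <= 1)%N%:R.
Proof.
move=> ns; have hz : ((zs (add_edge d p))%:R : rat) <= (zs d)%:R by rewrite ler_nat zs_add.
have hc := cost_le1 s (d p.1) (d p.2).
have hc0 := cost_ge0 s (d p.1) (d p.2).
rewrite /cand Vd0 Vd1; case: ifP => h0.
  move/pair_in => [/mem_zo e1 /mem_zo e2 ne].
  have := zs_add00 ne e1 e2 => /(congr1 (fun x => x%:R : rat)).
  rewrite -addn2 natrD => hz2.
  have : (0 : rat) <= (#|V :&: oset d| <= 1)%N%:R by apply: ler0n.
  lra.
case: ifP => h1.
  move/pair_in => [/mem_zo e1 /mem_zo e2 ne].
  rewrite e1 e2 cost11 //.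
  have : (0 : rat) <= (#|V :&: oset d| <= 1)%N%:R by apply: ler0n.
  lra.
move=> _; rewrite leqNgt h1 /=; lra.
Qed.

Lemma pw1 s (d : degs n) V p : (2 * s < n)%N -> p \in dpairs (cand d V) ->
  rg_cost n s (d p.1) (d p.2) + 3 / 2 * (zs (add_edge d p))%:R
    <= 3 / 2 * (zs d)%:R - 3 + 4 * (#|V :&: zset d| <= 1)%N%:R.
Proof.
move=> ns; have hz : ((zs (add_edge d p))%:R : rat) <= (zs d)%:R by rewrite ler_nat zs_add.
have hc := cost_le1 s (d p.1) (d p.2).
rewrite /cand Vd0 Vd1; case: ifP => h0.
  move/pair_in => [/mem_zo e1 /mem_zo e2 ne].
  have := zs_add00 ne e1 e2 => /(congr1 (fun x => x%:R : rat)).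
  rewrite -addn2 natrD => hz2.
  rewrite e1 e2 cost00 //.
  have : (0 : rat) <= (#|V :&: zset d| <= 1)%N%:R by apply: ler0n.
  lra.
move=> _; rewrite leqNgt h0 /=; lra.
Qed.

Lemma avg2 (d : degs n) (F : {set 'I_n} -> 'I_n * 'I_n -> rat) (c a : rat) (ind : {set 'I_n} -> rat) :
  (forall V p, V \in K -> p \in dpairs (cand d V) -> F V p <= c + a * ind V) ->
  avg K (fun V => avg (dpairs (cand d V)) (F V)) <= c + a * avg K ind.
Proof.
move=> H; rewrite -avg_affine ?K0 //; apply: avg_le => V VK.
rewrite -(@avg_const _ (dpairs (cand d V)) (c + a * ind V)); last first.
  exact: dpairs0 (cand_big d VK).
by apply: avg_le => p pp; apply: H.
Qed.

Lemma step s (d : degs n) : inv s d -> (s < n)%N ->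
  avg K (fun V => avg (dpairs (cand d V)) (fun p =>
     rg_cost n s (d p.1) (d p.2) + Phi s.+1 (add_edge d p))) <= Phi s d.
Proof.
move=> hinv sn; rewrite [X in _ <= X]/Phi; case: ifP => hs.
  have hs2 : (2 * s < n)%N by rewrite -hh_iff.
  set S1 := \sum_(s.+1 <= u < hh) beta (n - 2 * u)%N.
  apply: (le_trans (@avg2 d _ (3 / 2 * ((zs d)%:R + (2 * s)%N%:R - n%:R) + 4 * S1 + B) 4
              (fun V => (#|V :&: zset d| <= 1)%N%:R) _)).
    move=> V p VK pp.
    have hP : Phi s.+1 (add_edge d p) <= P1 s.+1 (add_edge d p).
      rewrite /Phi; case: ifP => // hs'; apply: P2_le_P1.
      by move: hs'; rewrite hh_iff => /negbT; rewrite -leqNgt.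
    have := pw1 hs2 pp.
    have e : ((2 * s.+1)%N%:R : rat) = (2 * s)%N%:R + 2.
      by rewrite -natrD; congr (_%:R); lia.
    move: hP; rewrite /P1 -/S1 e.
    lra.
  rewrite avg_beta /P1 big_ltn -/S1 //.
  have hb : beta (zs d) <= beta (n - 2 * s)%N.
    by apply: beta_anti; have := inv_z hinv; lia.
  lra.
have hs2 : (n <= 2 * s)%N by move/negbT: hs; rewrite hh_iff -leqNgt.
apply: (le_trans (@avg2 d _ ((zs d)%:R / 2 + Psi s.+1 (zs d)) 1
              (fun V => (#|V :&: oset d| <= 1)%N%:R) _)).
  move=> V p VK pp.
  have hP : Phi s.+1 (add_edge d p) <= P2 s.+1 (add_edge d p).
    rewrite /Phi; case: ifP => // hs'.
    by move: hs'; rewrite hh_iff; lia.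
  have := pw2 hs2 pp.
  have := Psi_mono s.+1 (zs_add d p).
  move: hP; rewrite /P2.
  lra.
rewrite avg_beta /P2 (Psi_step _ sn).
have hb : beta #|oset d| <= beta (2 * (n - zs d) - 2 * s)%N.
  by apply: beta_anti; have := inv_o hinv; lia.
lra.
Qed.

Lemma main r : forall s (d : degs n), inv s d -> (s + r <= n)%N -> expRG k r s d <= Phi s d.
Proof.
elim: r => [|r IH] s d hinv hsr; first by rewrite /= Phi_ge0.
apply: le_trans (step hinv _); last lia.
rewrite /=; apply: avg_le => V VK; apply: avg_le => p pp.
rewrite lerD //; apply: IH; first exact: inv_add.
lia.
Qed.

Lemma final t : (t <= n)%N -> DRV_expected_red_green n k t <= 24 * n%:R / k%:R.
Proof.
move=> tn; rewrite /DRV_expected_red_green.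
set d0 : degs n := [ffun => 0%N].
have i0 : inv 0 d0.
  by rewrite /inv big1 // => v _; rewrite ffunE.
apply: (le_trans (main i0 _)); first by rewrite add0n.
have z0 : zs d0 = n.
  rewrite /zs -[X in _ = X]card_ord; apply: eq_card => v; by rewrite !inE ffunE.
rewrite /Phi (_ : (0 < hh)%N); last by rewrite hh_iff; lia.
rewrite /P1 z0 muln0 addr0 subrr mulr0 add0r.
have h1 := P1sum_bound; have h2 := B_le; have h3 := B_ge0.
have kp : (0 : rat) < k%:R by rewrite ltr0n; lia.
have h4 : 1 <= n%:R / k%:R :> rat.
  by rewrite ler_pdivlMr // mul1r ler_nat.
have e : 24 * n%:R / k%:R = 24 * (n%:R / k%:R) :> rat by rewrite mulrA.
have e2 : 4 * n%:R / k%:R = 4 * (n%:R / k%:R) :> rat by rewrite mulrA.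
rewrite e; rewrite e2 in h2.
lra.
Qed.

End Proof.

Local Close Scope ring_scope.

Theorem lemma1 (k : nat -> nat)
  (hk : forall n, 2 <= n -> 2 <= k n <= n)
  (hinf : forall M, exists N, forall n, N <= n -> M <= k n)
  (hlog : forall n, 2 <= n -> n <= 2 ^ k n) :
  exists C : rat, forall n t, 2 <= n -> t <= n ->
    (DRV_expected_red_green n (k n) t <= C * n%:R / (k n)%:R)%R.
Proof.
exists 24%R => n t n2 tn.
have /andP[h1 h2] := hk n n2.
exact: final.
Qed.
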